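(* Suppose assumption (C) below holds. Fix $k\ge3$ and let $\mathcal U_k$ be the set from (C); for a scalar $T$ (tensor of order $0$) define $\|T\|_{\mathcal U_k}=|T|$. Then for any $\varepsilon>0$ there exists $C\equiv C(\varepsilon,k)>0$ such that for all $i\in[N]$, all $0\le m\le k$, all $\mathbf s_1,\dots,\mathbf s_m\in\mathbb C^n$ and all $T\in(\mathbb C^n)^{\otimes k-m}$, \[|\langle\kappa_k(\mathbf g_i),\mathbf s_1\otimes\cdots\otimes\mathbf s_m\otimes T\rangle|\le Cn^{\varepsilon}(\sqrt n)^{k-m}\|T\|_{\mathcal U_k}\prod_{t=1}^m\|\mathbf s_t\|_2.\]
   Context: $\mathbf g_1,\dots,\mathbf g_N\in\mathbb R^n$ are random vectors with finite moments (indexed by $N$, $n=n(N)$). $\langle\cdot,\cdot\rangle$ denotes the non-conjugate (bilinear) scalar product on $(\mathbb C^n)^{\otimes k}$. $\kappa_k(\mathbf g_i)\in(\mathbb R^n)^{\otimes k}$ is the $k$-th cumulant tensor, with entries the mixed cumulants $\kappa_k(\mathbf e_{\alpha_1}^*\mathbf g_i,\dots,\mathbf e_{\alpha_k}^*\mathbf g_i)$. For $\mathcal U\subseteq\mathbb R^n$ and $T$ of order $k\ge1$, $\|T\|_{\mathcal U}=\sup_{\mathbf x_1,\dots,\mathbf x_k\in\mathcal U}|\langle\mathbf x_1\otimes\cdots\otimes\mathbf x_k,T\rangle|$. (C): for each $k\ge3$ there exist $C_k>0$ and a deterministic $\mathcal U_k\subset\mathbb R^n$ with $\{\mathbf e_1,\dots,\mathbf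 e_n\}\subseteq\mathcal U_k$, $|\mathcal U_k|\le n^{C_k}$, $\|\mathbf x\|_2\le C_k$ for all $\mathbf x\in\mathcal U_k$, such that for any $\varepsilon>0$ there is $C(\varepsilon,k)$ with, for each $i$, $m\in\{1,\dots,k-1\}$, $\mathbf s_1,\dots,\mathbf s_m\in\mathbb R^n$, $T\in(\mathbb R^n)^{\otimes k-m}$: $|\langle\kappa_k(\mathbf g_i),\mathbf s_1\otimes\cdots\otimes\mathbf s_m\otimes T\rangle|\le Cn^\varepsilon(\sqrt n)^{k-m-1}\|T\|_{\mathcal U_k}\prod_t\|\mathbf s_t\|_2$. *)

(* Defs.v *)
From HB Require Import structures.
From mathcomp Require Import all_boot all_order all_algebra.
From mathcomp Require Import all_classical all_reals.
From mathcomp Require Import measure lebesgue_integral probability exp.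
From mathcomp Require Import complex.
From mathcomp Require Import zify.

Set Implicit Arguments.
Unset Strict Implicit.
Unset Printing Implicit Defensive.

Import Order.TTheory GRing.Theory Num.Theory.
Local Open Scope ring_scope.

Definition mixed_cumulant {d} {Omega : measurableType d} {R : realType}
  (P : probability Omega R) (k : nat) (X : 'I_k -> Omega -> R) : R :=
  \sum_(p : {set {set 'I_k}} | finset.partition p [set: 'I_k])
     (-1) ^+ (#|p|.-1) * ((#|p|.-1)`!)%:R *
     \prod_(B in p) fine ('E_P[fun w => (\prod_(j in B) X j w)%R]).

Definition cumulant_tensor {d} {Omega : measurableType d} {R : realType}
  (P : probability Omega R) (n k : nat) (g : Omega -> 'I_n -> R)
  (alpha : {ffun 'I_k -> 'I_n}) : R :=
  mixed_cumulant P (fun j w => g w (alpha j)).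
Arguments cumulant_tensor {d Omega R} P {n} k g alpha.

Definition tensor (K : Type) (n k : nat) := {ffun 'I_k -> 'I_n} -> K.

(* non-conjugate bilinear scalar product *)
Definition tpair (K : pzRingType) (n k : nat) (A B : tensor K n k) : K :=
  \sum_(a : {ffun 'I_k -> 'I_n}) A a * B a.

Lemma shift_proof (m k : nat) (j : 'I_(k - m)) : (m + j < k)%N.
Proof. case: j => j /= hj; lia. Qed.

Definition shift_ord {m k : nat} (j : 'I_(k - m)) : 'I_k := Ordinal (shift_proof j).

(* s_1 (x) ... (x) s_m (x) T, a tensor of order k (meaningful for m <= k) *)
Definition stens (K : pzRingType) (n k m : nat) (s : 'I_m -> 'I_n -> K)
  (T : tensor K n (k - m)) : tensor K n k :=
  fun a => (\prod_(t < m) oapp (fun j : 'I_k => s t (a j)) 0 (insub (val t)))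
           * T [ffun j => a (@shift_ord m k j)].

Definition rtens (R : pzRingType) (n r : nat) (x : 'I_r -> 'rV[R]_n) : tensor R n r :=
  fun a => \prod_(j < r) x j 0 (a j).

(* ||T||_U = sup_{x_1..x_r in U} |<x_1 (x) .. (x) x_r, T>| ; for r = 0 this is |T| *)
Definition unormR (R : realType) (n r : nat) (U : seq 'rV[R]_n) (T : tensor R n r) : R :=
  \big[Num.max/0]_(c : {ffun 'I_r -> 'I_(size U)})
     `| tpair (rtens (fun j => nth 0 U (c j))) T |.

Definition unormC (R : realType) (n r : nat) (U : seq 'rV[R]_n) (T : tensor R[i] n r) : R :=
  \big[Num.max/0]_(c : {ffun 'I_r -> 'I_(size U)})
     Normc.normc (tpair (fun a => (rtens (fun j => nth 0 U (c j)) a)%:C)%C T).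

Definition l2R (R : realType) (n : nat) (s : 'I_n -> R) : R :=
  Num.sqrt (\sum_(a < n) s a ^+ 2).
Definition l2C (R : realType) (n : nat) (s : 'I_n -> R[i]) : R :=
  Num.sqrt (\sum_(a < n) Normc.normc (s a) ^+ 2).
Definition l2rV (R : realType) (n : nat) (x : 'rV[R]_n) : R :=
  Num.sqrt (\sum_(a < n) x 0 a ^+ 2).

Definition evec (R : pzRingType) (n : nat) (a : 'I_n) : 'rV[R]_n :=
  \row_(b < n) (b == a)%:R.

(* Assumption (C) for a fixed k, constant Ck and deterministic sets    *)
(* U N (one for each N, with n = n N), for the family g N i, i in [N]. *)
Definition assumptionC_k {d} {Omega : measurableType d} {R : realType}
  (P : probability Omega R) (n : nat -> nat)
  (g : forall N : nat, 'I_N -> Omega -> 'I_(n N) -> R)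
  (k : nat) (Ck : R) (U : forall N : nat, seq 'rV[R]_(n N)) : Prop :=
  [/\ 0 < Ck,
      (forall N (a : 'I_(n N)), evec R a \in U N),
      (forall N, (size (undup (U N)))%:R <= ((n N)%:R `^ Ck)%R),
      (forall N x, x \in U N -> l2rV x <= Ck) &
      (forall eps : R, 0 < eps -> exists C : R, 0 < C /\
         forall (N : nat) (i : 'I_N) (m : nat), (1 <= m <= k - 1)%N ->
         forall (s : 'I_m -> 'I_(n N) -> R) (T : tensor R (n N) (k - m)),
           `| tpair (cumulant_tensor P k (g N i)) (stens s T) |
             <= C * ((n N)%:R `^ eps) * Num.sqrt ((n N)%:R) ^+ (k - m - 1)
                * unormR (U N) T * \prod_(t < m) l2R (s t))].

Definition assumptionC {d} {Omega : measurableType d} {R : realType}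
  (P : probability Omega R) (n : nat -> nat)
  (g : forall N : nat, 'I_N -> Omega -> 'I_(n N) -> R) : Prop :=
  forall k : nat, (3 <= k)%N ->
    exists (Ck : R) (U : forall N : nat, seq 'rV[R]_(n N)), assumptionC_k P g k Ck U.

Definition finite_moments {d} {Omega : measurableType d} {R : realType}
  (P : probability Omega R) (n : nat -> nat)
  (g : forall N : nat, 'I_N -> Omega -> 'I_(n N) -> R) : Prop :=
  forall (N : nat) (i : 'I_N) (s : seq 'I_(n N)),
    P.-integrable setT (fun w => (\prod_(a <- s) g N i w a)%:E).

(* Main.v *)
Require Import Defs.
From HB Require Import structures.
From mathcomp Require Import all_boot all_order all_algebra.
From mathcomp Require Import all_classical all_reals.
From mathcomp Require Import measure lebesgue_integral probability exp.
From mathcomp Require Import complex.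
From mathcomp Require Import zify ring lra.

Import Order.TTheory GRing.Theory Num.Theory.
Local Open Scope ring_scope.

Set Implicit Arguments.
Unset Strict Implicit.
Unset Printing Implicit Defensive.


Definition glue {A : finType} {K K' : nat} (b : A) (c : {ffun 'I_K' -> A}) : {ffun 'I_K -> A} :=
  [ffun j : 'I_K => if val j is j'.+1 then oapp c b (insub j') else b].

Lemma glue0 (A : finType) K K' (b : A) (c : {ffun 'I_K' -> A}) (j : 'I_K) :
  val j = 0%N -> glue b c j = b.
Proof. by rewrite ffunE => ->. Qed.

Lemma glueS (A : finType) K K' (b : A) (c : {ffun 'I_K' -> A}) (j : 'I_K) (j' : 'I_K') :
  val j = (val j').+1 -> glue b c j = c j'.
Proof. by rewrite ffunE => ->; rewrite valK. Qed.

Lemma sum_glue (V : nmodType) K K' (e : K = K'.+1) (A : finType)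
  (G : {ffun 'I_K -> A} -> V) :
  \sum_a G a = \sum_(b : A) \sum_(c : {ffun 'I_K' -> A}) G (glue b c).
Proof.
subst K; rewrite pair_bigA /=.
rewrite (reindex (fun p : A * {ffun 'I_K' -> A} => glue p.1 p.2)) //=.
exists (fun a : {ffun 'I_K'.+1 -> A} => (a ord0, [ffun j => a (lift ord0 j)])).
  move=> [b c] _ /=; congr pair; first by rewrite glue0.
  by apply/ffunP => j; rewrite ffunE (glueS _ _ (j' := j)).
move=> a _ /=; apply/ffunP => -[[|j] hj].
  by rewrite glue0 //; apply: f_equal; apply: val_inj.
have hj' : (j < K')%N by [].
by rewrite (glueS _ _ (j' := Ordinal hj')) // ffunE; apply: f_equal; apply: val_inj.
Qed.

Lemma prod_glue (V : comPzSemiRingType) K K' (e : K = K'.+1) (A B : finType)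
  (H : A -> B -> V) x y (c : {ffun 'I_K' -> A}) (d : {ffun 'I_K' -> B}) :
  \prod_(j : 'I_K) H (glue x c j) (glue y d j) = H x y * \prod_(j : 'I_K') H (c j) (d j).
Proof.
subst K; rewrite big_ord_recl !glue0 //; congr (_ * _).
by apply: eq_bigr => j _; rewrite !(glueS _ _ (j' := j)).
Qed.

Lemma prod_last (V : comPzSemiRingType) K K' (e : K = K'.+1) (F : nat -> V) :
  \prod_(t < K) F (val t) = \prod_(t < K') F (val t) * F K'.
Proof. by subst K; rewrite big_ord_recr. Qed.

Lemma ffun_ord0 (A : finType) K (e : K = 0%N) (f g : {ffun 'I_K -> A}) : f = g.
Proof. by apply/ffunP => j; have := ltn_ord j; rewrite {2}e. Qed.


Lemma cs_ineq (R : realType) n (u v : 'I_n -> R) :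
  `|\sum_a u a * v a| <= Num.sqrt (\sum_a u a ^+ 2) * Num.sqrt (\sum_a v a ^+ 2).
Proof.
have su : 0 <= \sum_a u a ^+ 2 by apply: sumr_ge0 => a _; exact: sqr_ge0.
have sv : 0 <= \sum_a v a ^+ 2 by apply: sumr_ge0 => a _; exact: sqr_ge0.
set A := Num.sqrt _; set B := Num.sqrt _.
have hA : A ^+ 2 = \sum_a u a ^+ 2 by rewrite sqr_sqrtr.
have hB : B ^+ 2 = \sum_a v a ^+ 2 by rewrite sqr_sqrtr.
have A0 : 0 <= A by exact: sqrtr_ge0.
have B0 : 0 <= B by exact: sqrtr_ge0.
apply: le_trans (ler_norm_sum _ _ _) _.
under eq_bigr do rewrite normrM.
have [Ae|Anz] := eqVneq A 0.
  rewrite Ae in hA *.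
  have u0 : forall a, u a = 0.
    move=> a; apply/eqP; rewrite -sqrf_eq0.
    move: hA; rewrite expr0n /= => /esym /eqP; rewrite psumr_eq0; last by move=> *; exact: sqr_ge0.
    by move/allP => /(_ a (mem_index_enum a)) /=.
  by rewrite mul0r big1 // => a _; rewrite u0 normr0 mul0r.
have [Be|Bnz] := eqVneq B 0.
  rewrite Be in hB *.
  have v0 : forall a, v a = 0.
    move=> a; apply/eqP; rewrite -sqrf_eq0.
    move: hB; rewrite expr0n /= => /esym /eqP; rewrite psumr_eq0; last by move=> *; exact: sqr_ge0.
    by move/allP => /(_ a (mem_index_enum a)) /=.
  by rewrite mulr0 big1 // => a _; rewrite v0 normr0 mulr0.
have Ap : 0 < A by rewrite lt_def Anz.
have Bp : 0 < B by rewrite lt_def Bnz.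
have key : 2 * A * B * (\sum_a `|u a| * `|v a|) <= 2 * (A ^+ 2 * B ^+ 2).
  rewrite mulr_sumr.
  have -> : 2 * (A ^+ 2 * B ^+ 2) = \sum_a (B ^+ 2 * u a ^+ 2 + A ^+ 2 * v a ^+ 2).
    by rewrite big_split /= -!mulr_sumr -hA -hB; ring.
  apply: ler_sum => a _.
  rewrite -(real_normK (num_real (u a))) -(real_normK (num_real (v a))).
  have := sqr_ge0 (B * `|u a| - A * `|v a|); nra.
have ABp : 0 < 2 * A * B by rewrite !mulr_gt0.
rewrite -(ler_pM2l ABp); apply: le_trans key _.
by rewrite le_eqVlt; apply/orP; left; apply/eqP; ring.
Qed.

Lemma insub_widen m k (H : (m <= k)%N) (t : 'I_m) :
  insub (val t) = Some (widen_ord H t) :> option 'I_k.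
Proof.
case: insubP => [u _ hu|]; first by congr Some; apply: val_inj.
by rewrite /= (leq_trans (ltn_ord t) H).
Qed.

Lemma stens_real (K : pzRingType) n k m (H : (m <= k)%N) (s : 'I_m -> 'I_n -> K)
  (T : tensor K n (k - m)) a :
  stens s T a = (\prod_(t < m) s t (a (widen_ord H t))) * T [ffun j => a (shift_ord j)].
Proof.
rewrite /stens; congr (_ * _); apply: eq_bigr => t _.
by rewrite insub_widen.
Qed.

Lemma sum_delta (V : pzSemiRingType) n (b0 : 'I_n) (F : 'I_n -> V) :
  \sum_b (b0 == b)%:R * F b = F b0.
Proof.
rewrite (bigD1 b0) //= eqxx mul1r big1 ?addr0 // => b /negbTE.
by rewrite eq_sym => ->; rewrite mul0r.
Qed.

Lemma tpair_sum (V : pzRingType) n k (I : finType) (A : tensor V n k) (F : I -> tensor V n k) :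
  tpair A (fun a => \sum_i F i a) = \sum_i tpair A (F i).
Proof.
rewrite /tpair exchange_big /=; apply: eq_bigr => a _.
by rewrite mulr_sumr.
Qed.

Lemma unormR_ge0 (R : realType) n r (U : seq 'rV[R]_n) (T : tensor R n r) :
  0 <= unormR U T.
Proof. exact: bigmax_ge_id. Qed.

Lemma l2R_ge0 (R : realType) n (s : 'I_n -> R) : 0 <= l2R s.
Proof. exact: sqrtr_ge0. Qed.

Lemma prod_l2R_ge0 (R : realType) n m (s : 'I_m -> 'I_n -> R) : 0 <= \prod_(t < m) l2R (s t).
Proof. by apply: prodr_ge0 => t _; exact: l2R_ge0. Qed.

Lemma unorm_peel (R : realType) n K K' (e : K = K'.+1) (U : seq 'rV[R]_n)
  (T : tensor R n K) (b : 'I_n) :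
  evec R b \in U -> unormR U (fun c : {ffun 'I_K' -> 'I_n} => T (glue b c)) <= unormR U T.
Proof.
move=> hb; apply: bigmax_le; first exact: unormR_ge0.
move=> c' _.
have hib : (index (evec R b) U < size U)%N by rewrite index_mem.
pose ib : 'I_(size U) := Ordinal hib.
have Uib : nth 0 U ib = evec R b by rewrite /= nth_index.
rewrite [X in _ <= X]/unormR.
apply: le_trans _ (le_bigmax _ _ (glue ib c')).
rewrite le_eqVlt; apply/orP; left; apply/eqP; congr (`| _ |).
rewrite /tpair (sum_glue e) /=.
rewrite (eq_bigr (fun b' => \sum_(c : {ffun 'I_K' -> 'I_n})
   (b == b')%:R * (rtens (fun j => nth 0 U (c' j)) c * T (glue b' c)))).
  rewrite -(sum_delta b (fun b' => \sum_(c : {ffun 'I_K' -> 'I_n}) rtens (fun j => nth 0 U (c' j)) c * T (glue b' c))).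
  by apply: eq_bigr => b' _; rewrite mulr_sumr.
move=> b' _; apply: eq_bigr => c _.
rewrite /rtens (prod_glue e (fun (x : 'I_(size U)) (y : 'I_n) => nth 0 U x 0 y)) /= Uib.
by rewrite /evec mxE eq_sym mulrA.
Qed.

Lemma sum_ffun0 (V : nmodType) n (F : {ffun 'I_0 -> 'I_n} -> V) f0 :
  \sum_a F a = F f0.
Proof.
rewrite (eq_bigr (fun _ => F f0)); last by move=> a _; rewrite (ffun_ord0 erefl a f0).
by rewrite sumr_const card_ffun !card_ord expn0.
Qed.

Lemma unorm_ord0 (R : realType) n K (e : K = 0%N) (U : seq 'rV[R]_n) (T : tensor R n K)
  (i0 : 'I_(size U)) f0 : `|T f0| <= unormR U T.
Proof.
rewrite /unormR; apply: le_trans _ (le_bigmax _ _ [ffun _ => i0]).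
subst K; rewrite /tpair (sum_ffun0 _ f0) /rtens big_ord0 mul1r.
by [].
Qed.

Lemma unorm_one (R : realType) n K (e : K = 1%N) (U : seq 'rV[R]_n) (Ck : R) :
  0 <= Ck -> (forall x, x \in U -> l2rV x <= Ck) ->
  forall (z : 'I_K) (v : 'I_n -> R) (t0 : R),
  unormR U (fun c => v (c z) * t0) <= Ck * l2R v * `|t0|.
Proof.
move=> Ck0 hU z v t0; apply: bigmax_le.
  by rewrite !mulr_ge0 // l2R_ge0.
move=> c _; subst K.
have hz : z = ord0 by apply: val_inj; case: z => -[].
subst z.
rewrite /tpair (sum_glue (K' := 0) erefl).
set u := nth 0 U (c ord0).
rewrite (eq_bigr (fun b => t0 * (u 0 b * v b))); last first.
  move=> b _; rewrite (sum_ffun0 _ [ffun j => b]) /rtens big_ord1 !glue0 //.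
  rewrite /u; ring.
rewrite -mulr_sumr normrM mulrC.
apply: ler_wpM2r; first exact: normr_ge0.
apply: le_trans (cs_ineq _ _) _.
apply: ler_wpM2r; first exact: sqrtr_ge0.
apply: hU; rewrite /u mem_nth //.
Qed.

Lemma sqrt_shift (R : realType) n p q : q = p.+2 ->
  Num.sqrt (n%:R : R) ^+ p * n%:R = Num.sqrt (n%:R) ^+ q.
Proof.
by move=> ->; rewrite -addn2 exprD sqr_sqrtr // ler0n.
Qed.

Lemma sqrt_le_succ (R : realType) n p q : (0 < n)%N -> (p <= q)%N ->
  Num.sqrt (n%:R : R) ^+ p <= Num.sqrt (n%:R) ^+ q.
Proof.
move=> hn hpq; have h1 : 1 <= Num.sqrt (n%:R : R).
  by rewrite -[X in X <= _]sqrtr1 ler_sqrt ?ler0n // ler1n.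
by rewrite -(subnK hpq) exprD ler_peMl // ?exprn_ege1 // exprn_ge0 // sqrtr_ge0.
Qed.

Lemma RB (R : realType) n k (kap : tensor R n k) (U : seq 'rV[R]_n) (Ck Cn : R) :
  (3 <= k)%N -> (0 < n)%N -> 0 <= Cn -> 0 <= Ck ->
  (forall a : 'I_n, evec R a \in U) ->
  (forall x, x \in U -> l2rV x <= Ck) ->
  (forall m, (1 <= m <= k - 1)%N -> forall (s : 'I_m -> 'I_n -> R) (T : tensor R n (k - m)),
     `|tpair kap (stens s T)| <= Cn * Num.sqrt (n%:R) ^+ (k - m - 1) * unormR U T
                                 * \prod_(t < m) l2R (s t)) ->
  forall m, (m <= k)%N -> forall (s : 'I_m -> 'I_n -> R) (T : tensor R n (k - m)),
     `|tpair kap (stens s T)| <= Cn * (1 + Ck) * Num.sqrt (n%:R) ^+ (k - m) * unormR U T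
                                 * \prod_(t < m) l2R (s t).
Proof.
move=> hk hn Cn0 Ck0 hU hUn hC m.
have sq0 : forall p, 0 <= Num.sqrt (n%:R : R) ^+ p by move=> p; rewrite exprn_ge0 // sqrtr_ge0.
have Cn1 : Cn <= Cn * (1 + Ck) by rewrite ler_peMr // lerDl.
case: m => [|m] hm s T.
  pose e1 := fun (b : 'I_n) (_ : 'I_1) (c : 'I_n) => ((c == b)%:R : R).
  pose Tb := fun (b : 'I_n) (c : {ffun 'I_(k-1) -> 'I_n}) => T (glue b c).
  have ek : (k - 0 = (k - 1).+1)%N by lia.
  have h1k : (1 <= k)%N by lia.
  have claim : forall a, stens s T a = \sum_b stens (e1 b) (Tb b) a.
    move=> a; rewrite (stens_real (leq0n k)) big_ord0 mul1r.
    under eq_bigr do rewrite (stens_real h1k) big_ord1.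
    rewrite /e1 /Tb (sum_delta _ (fun b => T (glue b [ffun j => a (shift_ord j)]))).
    congr (T _); apply/ffunP => j; rewrite ffunE.
    case hj: (val j) => [|j'].
      by rewrite glue0 //; apply: f_equal; apply: val_inj; rewrite /= hj.
    have hj' : (j' < k - 1)%N by have := ltn_ord j; rewrite -[nat_of_ord j]/(val j) hj; lia.
    rewrite (glueS _ _ (j' := Ordinal hj')) ?ffunE //.
    by apply: f_equal; apply: val_inj => /=; rewrite -[nat_of_ord j]/(val j) hj; lia.
  have htp : tpair kap (stens s T) = \sum_b tpair kap (stens (e1 b) (Tb b)).
    by rewrite -tpair_sum; congr tpair; apply: funext => a; exact: claim.
  rewrite htp big_ord0 mulr1.
  apply: le_trans (ler_norm_sum _ _ _) _.
  apply: (@le_trans _ _ (\sum_(b : 'I_n) Cn * Num.sqrt n%:R ^+ (k - 1 - 1)%N * unormR U T)).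
    apply: ler_sum => b _.
    apply: le_trans (hC 1%N _ (e1 b) (Tb b)) _; first by lia.
    rewrite big_ord1.
    have -> : l2R (e1 b ord0) = 1.
      rewrite /l2R /e1 (eq_bigr (fun c => (b == c)%:R * 1)) ?sum_delta ?sqrtr1 //.
      by move=> c _; rewrite eq_sym mulr1; case: (b == c) => /=; rewrite ?expr1n ?expr0n.
    rewrite mulr1; apply: ler_wpM2l; first by rewrite mulr_ge0.
    exact: (unorm_peel ek _ (hU b)).
  rewrite sumr_const card_ord -(mulr_natr (Cn * Num.sqrt n%:R ^+ (k - 1 - 1)%N * unormR U T)).
  rewrite -(@sqrt_shift R n (k - 1 - 1)%N (k - 0)%N); last by lia.
  have Q0 := mulr_ge0 (mulr_ge0 (mulr_ge0 (sq0 (k - 1 - 1)%N) (unormR_ge0 U T)) (ler0n R n)) (mulr_ge0 Cn0 Ck0).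
  nra.
have [ek|nek] := eqVneq m.+1 k; last first.
  apply: le_trans (hC m.+1 _ s T) _; first by lia.
  rewrite ler_wpM2r ?prod_l2R_ge0 // ler_wpM2r ?unormR_ge0 //.
  apply: ler_pM => //; apply: sqrt_le_succ => //; lia.
subst k.
pose s' := fun t : 'I_m => s (widen_ord (leqnSn m) t).
have W : forall x : 'I_m.+1, widen_ord (leqnn m.+1) x = x by move=> x; apply: val_inj.
have e1 : (m.+1 - m = 1)%N by lia.
have hz : (0 < m.+1 - m)%N by lia.
pose z : 'I_(m.+1 - m) := Ordinal hz.
pose f0 : {ffun 'I_(m.+1 - m.+1) -> 'I_n} := [ffun _ => Ordinal hn].
pose T' := fun c : {ffun 'I_(m.+1 - m) -> 'I_n} => s ord_max (c z) * T f0.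
have claim : forall a, stens s T a = stens s' T' a.
  move=> a; rewrite (stens_real (leqnn m.+1)) (stens_real (leqnSn m)).
  rewrite big_ord_recr /= /T' ffunE mulrA; congr (_ * _ * _).
  - by apply: eq_bigr => t _; rewrite W.
  - by rewrite W; congr (s _ (a _)); apply: val_inj => /=; rewrite addn0.
  - by congr (T _); apply: (ffun_ord0 (subnn _)).
have htp : tpair kap (stens s T) = tpair kap (stens s' T').
  by congr tpair; apply: funext => a; exact: claim.
rewrite htp.
apply: le_trans (hC m _ s' T') _; first by lia.
rewrite big_ord_recr /=.
have x0 : Num.sqrt (n%:R : R) ^+ (m.+1 - m - 1) = 1.
  by rewrite (_ : (m.+1 - m - 1 = 0)%N) ?expr0 //; lia.
have x1 : Num.sqrt (n%:R : R) ^+ (m.+1 - m.+1) = 1 by rewrite subnn expr0.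
rewrite x0 x1 !mulr1.
have hi0 : (index (evec R (Ordinal hn)) U < size U)%N by rewrite index_mem.
have hT0 := unorm_ord0 (subnn _) T (Ordinal hi0) f0.
have hT' := unorm_one e1 Ck0 hUn z (s ord_max) (T f0).
apply: (@le_trans _ _ (Cn * (Ck * l2R (s ord_max) * unormR U T) * \prod_(t<m) l2R (s' t))).
  rewrite ler_wpM2r ?prod_l2R_ge0 // ler_wpM2l //.
  by apply: le_trans hT' _; rewrite ler_wpM2l // mulr_ge0 // l2R_ge0.
have := mulr_ge0 (mulr_ge0 (mulr_ge0 Cn0 (l2R_ge0 (s ord_max))) (unormR_ge0 U T)) (prod_l2R_ge0 s').
rewrite /s'; nra.
Qed.

Lemma ReD (R : realType) (x y : R[i]) : complex.Re (x + y) = complex.Re x + complex.Re y.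
Proof. by case: x; case: y. Qed.
Lemma ImD (R : realType) (x y : R[i]) : complex.Im (x + y) = complex.Im x + complex.Im y.
Proof. by case: x; case: y. Qed.

Lemma Re_sum (R : realType) (I : finType) (F : I -> R[i]) : complex.Re (\sum_i F i) = \sum_i complex.Re (F i).
Proof. by apply: (big_morph (@complex.Re R) (@ReD R)). Qed.
Lemma Im_sum (R : realType) (I : finType) (F : I -> R[i]) : complex.Im (\sum_i F i) = \sum_i complex.Im (F i).
Proof. by apply: (big_morph (@complex.Im R) (@ImD R)). Qed.

Lemma ReM_real (R : realType) (r : R) (z : R[i]) : complex.Re ((r%:C)%C * z) = r * complex.Re z.
Proof. by case: z => a b /=; rewrite mul0r subr0. Qed.
Lemma ImM_real (R : realType) (r : R) (z : R[i]) : complex.Im ((r%:C)%C * z) = r * complex.Im z.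
Proof. by case: z => a b /=; rewrite mul0r addr0. Qed.

Lemma normc_ge0 (R : realType) (z : R[i]) : 0 <= Normc.normc z.
Proof. by case: z => a b; exact: sqrtr_ge0. Qed.

Lemma Re_le_normc (R : realType) (z : R[i]) : `|complex.Re z| <= Normc.normc z.
Proof.
case: z => a b /=; rewrite -sqrtr_sqr ler_sqrt ?addr_ge0 ?sqr_ge0 //.
by rewrite lerDl sqr_ge0.
Qed.
Lemma Im_le_normc (R : realType) (z : R[i]) : `|complex.Im z| <= Normc.normc z.
Proof.
case: z => a b /=; rewrite -sqrtr_sqr ler_sqrt ?addr_ge0 ?sqr_ge0 //.
by rewrite lerDr sqr_ge0.
Qed.

Lemma normc_real (R : realType) (r : R) : Normc.normc (r%:C)%C = `|r|.
Proof. by rewrite /= expr0n /= addr0 sqrtr_sqr. Qed.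

Lemma normc_i (R : realType) : Normc.normc ('i%C : R[i]) = 1.
Proof. by rewrite /= expr0n /= add0r expr1n sqrtr1. Qed.

Lemma normc_sum (R : realType) (I : finType) (F : I -> R[i]) :
  Normc.normc (\sum_i F i) <= \sum_i Normc.normc (F i).
Proof.
elim/big_rec2: _ => [|i y z _ hyz]; first by rewrite Normc.normc0.
by apply: le_trans (le_normcD _ _) _; rewrite lerD2l.
Qed.

Lemma normc_prod (R : realType) (I : finType) (F : I -> R[i]) :
  Normc.normc (\prod_i F i) = \prod_i Normc.normc (F i).
Proof. by apply: (big_morph _ (@Normc.normcM R) (@Normc.normc1 R)). Qed.

Lemma unormR_Re (R : realType) n r (U : seq 'rV[R]_n) (T : tensor R[i] n r) :
  unormR U (fun a => complex.Re (T a)) <= unormC U T.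
Proof.
apply: bigmax_le; first exact: bigmax_ge_id.
move=> c _; rewrite [X in _ <= X]/unormC; apply: le_trans _ (le_bigmax _ _ c).
apply: le_trans (Re_le_normc _); rewrite /tpair Re_sum.
by under [X in _ <= `|X|]eq_bigr do rewrite ReM_real.
Qed.

Lemma unormR_Im (R : realType) n r (U : seq 'rV[R]_n) (T : tensor R[i] n r) :
  unormR U (fun a => complex.Im (T a)) <= unormC U T.
Proof.
apply: bigmax_le; first exact: bigmax_ge_id.
move=> c _; rewrite [X in _ <= X]/unormC; apply: le_trans _ (le_bigmax _ _ c).
apply: le_trans (Im_le_normc _); rewrite /tpair Im_sum.
by under [X in _ <= `|X|]eq_bigr do rewrite ImM_real.
Qed.

Lemma l2R_Re (R : realType) n (s : 'I_n -> R[i]) : l2R (fun b => complex.Re (s b)) <= l2C s.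
Proof.
rewrite /l2R /l2C ler_sqrt; last by apply: sumr_ge0 => b _; exact: sqr_ge0.
apply: ler_sum => b _; case: (s b) => a c /=.
by rewrite sqr_sqrtr ?addr_ge0 ?sqr_ge0 // lerDl sqr_ge0.
Qed.
Lemma l2R_Im (R : realType) n (s : 'I_n -> R[i]) : l2R (fun b => complex.Im (s b)) <= l2C s.
Proof.
rewrite /l2R /l2C ler_sqrt; last by apply: sumr_ge0 => b _; exact: sqr_ge0.
apply: ler_sum => b _; case: (s b) => a c /=.
by rewrite sqr_sqrtr ?addr_ge0 ?sqr_ge0 // lerDr sqr_ge0.
Qed.

Lemma complex_reduce (R : realType) n k m (H : (m <= k)%N) (kap : tensor R n k)
  (U : seq 'rV[R]_n) (K : R) :
  0 <= K ->
  (forall (s : 'I_m -> 'I_n -> R) (T : tensor R n (k - m)),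
     `|tpair kap (stens s T)| <= K * unormR U T * \prod_(t < m) l2R (s t)) ->
  forall (s : 'I_m -> 'I_n -> R[i]) (T : tensor R[i] n (k - m)),
  Normc.normc (tpair (fun a => (kap a)%:C)%C (stens s T))
    <= 2 ^+ m.+1 * K * unormC U T * \prod_(t < m) l2C (s t).
Proof.
move=> K0 hR s T.
pose x := fun t b => complex.Re (s t b).
pose y := fun t b => complex.Im (s t b).
pose sf := fun (f : {ffun 'I_m -> bool}) t => if f t then y t else x t.
pose Ts := fun (sg : bool) (a : {ffun 'I_(k-m) -> 'I_n}) =>
  if sg then complex.Im (T a) else complex.Re (T a).
pose w := fun (f : {ffun 'I_m -> bool}) => \prod_(t < m) (if f t then 'i%C else 1) : R[i].
pose ws := fun sg : bool => (if sg then 'i%C else 1) : R[i].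
have claim : forall a, stens s T a =
    \sum_(f : {ffun 'I_m -> bool}) \sum_(sg : bool) w f * ws sg * ((stens (sf f) (Ts sg) a)%:C)%C.
  move=> a; rewrite (stens_real H).
  set a' := [ffun j => a (shift_ord j)].
  have hT : T a' = \sum_(sg : bool) ws sg * ((Ts sg a')%:C)%C.
    by rewrite big_bool /= mul1r addrC -complexE.
  have hP : \prod_(t < m) s t (a (widen_ord H t))
      = \sum_(f : {ffun 'I_m -> bool}) w f * ((\prod_(t < m) sf f t (a (widen_ord H t)))%:C)%C.
    rewrite (eq_bigr (fun t => \sum_(sg : bool)
       (if sg then 'i%C * ((y t (a (widen_ord H t)))%:C)%C else ((x t (a (widen_ord H t)))%:C)%C))); last first.
      by move=> t _; rewrite big_bool /= addrC -complexE.
    rewrite bigA_distr_bigA; apply: eq_bigr => f _.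
    rewrite /w rmorph_prod -big_split; apply: eq_bigr => t _.
    by rewrite /sf; case: (f t) => /=; rewrite ?mul1r.
  rewrite hP hT mulr_suml; apply: eq_bigr => f _; rewrite mulr_sumr; apply: eq_bigr => sg _.
  rewrite (stens_real H) rmorphM /=; ring.
have htp : tpair (fun a => (kap a)%:C)%C (stens s T) =
    \sum_(f : {ffun 'I_m -> bool}) \sum_(sg : bool)
       w f * ws sg * ((tpair kap (stens (sf f) (Ts sg)))%:C)%C.
  have -> : stens s T = fun a => \sum_(f : {ffun 'I_m -> bool})
      (fun f a => \sum_(sg : bool) w f * ws sg * ((stens (sf f) (Ts sg) a)%:C)%C) f a.
    by apply: funext => a; rewrite claim.
  rewrite tpair_sum; apply: eq_bigr => f _.
  rewrite tpair_sum; apply: eq_bigr => sg _.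
  rewrite /tpair rmorph_sum mulr_sumr; apply: eq_bigr => a _.
  rewrite !rmorphM; ring.
rewrite htp.
apply: le_trans (normc_sum _) _.
apply: (@le_trans _ _ (\sum_(f : {ffun 'I_m -> bool}) \sum_(sg : bool)
           K * unormC U T * \prod_(t < m) l2C (s t))).
  apply: ler_sum => f _; apply: le_trans (normc_sum _) _; apply: ler_sum => sg _.
  have w1 : Normc.normc (w f) = 1.
    rewrite /w normc_prod; apply: big1 => t _.
    by case: (f t); rewrite ?normc_i ?Normc.normc1.
  have ws1 : Normc.normc (ws sg) = 1.
    by rewrite /ws; case: sg; rewrite ?normc_i ?Normc.normc1.
  rewrite !Normc.normcM w1 ws1 normc_real !mul1r.
  apply: le_trans (hR _ _) _.
  apply: ler_pM.
  - by rewrite mulr_ge0 // unormR_ge0.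
  - exact: prod_l2R_ge0.
  - apply: ler_wpM2l => //; rewrite /Ts; case: sg ws1 => _.
      exact: unormR_Im.
    exact: unormR_Re.
  - apply: ler_prod => t _; rewrite l2R_ge0 /=; rewrite /sf; case: (f t).
      exact: l2R_Im.
    exact: l2R_Re.
rewrite !sumr_const card_ffun card_bool card_ord.
have -> : forall X : R, X *+ 2 *+ 2 ^ m = 2 ^+ m.+1 * X.
  by move=> X; rewrite -mulrnA -natrX mulr_natl expnS.
by rewrite !mulrA.
Qed.

Theorem lemma3p14 (d : measure_display) (Omega : measurableType d) (R : realType)
  (P : probability Omega R) (n : nat -> nat)
  (g : forall N : nat, 'I_N -> Omega -> 'I_(n N) -> R) :
  finite_moments P g ->
  assumptionC P g ->
  forall (k : nat), (3 <= k)%N ->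
  forall (Ck : R) (U : forall N : nat, seq 'rV[R]_(n N)),
    assumptionC_k P g k Ck U ->
  forall eps : R, 0 < eps -> exists C : R, 0 < C /\
    forall (N : nat) (i : 'I_N) (m : nat), (m <= k)%N ->
    forall (s : 'I_m -> 'I_(n N) -> R[i]) (T : tensor R[i] (n N) (k - m)),
      Normc.normc (tpair (fun a => (cumulant_tensor P k (g N i) a)%:C)%C (stens s T))
        <= C * ((n N)%:R `^ eps) * Num.sqrt ((n N)%:R) ^+ (k - m)
           * unormC (U N) T * \prod_(t < m) l2C (s t).
Proof.
move=> _ _ k hk Ck U [Ck0 hUe _ hUn hC] eps eps0.
have [C [C0 hCb]] := hC eps eps0.
have Ck0' : 0 <= Ck by exact: ltW.
exists (2 ^+ k.+1 * (C * (1 + Ck))); split.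
  by rewrite !mulr_gt0 // ?exprn_gt0 // ltr_pwDl.
move=> N i m hm s T.
have pe0 : 0 <= (n N)%:R `^ eps by exact: powR_ge0.
have sq0 : 0 <= Num.sqrt ((n N)%:R : R) ^+ (k - m) by rewrite exprn_ge0 // sqrtr_ge0.
have uC0 : 0 <= unormC (U N) T by exact: bigmax_ge_id.
have pC0 : 0 <= \prod_(t < m) l2C (s t) by apply: prodr_ge0 => t _; exact: sqrtr_ge0.
have [hn0|hnp] := posnP (n N).
  have hk0 : (0 < k)%N by lia.
  rewrite /tpair big1 ?Normc.normc0.
    by rewrite !mulr_ge0 // ?exprn_ge0 // ?addr_ge0 // ltW.
  move=> a _; case: (a (Ordinal hk0)) => v hv.
  by exfalso; move: hv; rewrite hn0.
have hRB := @RB R (n N) k (cumulant_tensor P k (g N i)) (U N) Ck (C * (n N)%:R `^ eps)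
  hk hnp (mulr_ge0 (ltW C0) pe0) Ck0' (hUe N) (hUn N) (hCb N i) m hm.
have hK : 0 <= C * (n N)%:R `^ eps * (1 + Ck) * Num.sqrt ((n N)%:R) ^+ (k - m).
  by rewrite !mulr_ge0 // ?addr_ge0 // ltW.
apply: le_trans (complex_reduce hm hK hRB s T) _.
have h2 : (2 : R) ^+ m.+1 <= 2 ^+ k.+1 by rewrite ler_eXn2l // ltr1n.
have Q0 : 0 <= C * (n N)%:R `^ eps * (1 + Ck) * Num.sqrt ((n N)%:R) ^+ (k - m)
               * unormC (U N) T * \prod_(t < m) l2C (s t).
  by rewrite !mulr_ge0 // ?addr_ge0 // ltW.
have := ler_wpM2r Q0 h2.
nra.
Qed.
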